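(* Let $d \ge 1$, $\mathcal{X}=\{0,1\}^d$, $p_+, p_- \in (0,1)$, and let $\phi$ be the randomization on $\mathcal{X}$ that, independently for each coordinate $i$, flips $x_i$ with probability $p_-$ if $x_i = 1$ and with probability $p_+$ if $x_i = 0$, i.e. $\Pr(\phi(x)_i \ne x_i) = p_-^{x_i} p_+^{1-x_i}$. Let $r_a, r_d \ge 0$ be integers, $x \in \mathcal{X}$, $\tilde{x} \in \mathcal{S}_{r_a,r_d}(x)$, $\mathcal{C} = \{i : x_i \ne \tilde{x}_i\}$, and for $q \ge 0$ let $\mathcal{R}_q^{r_a,r_d} = \{ z \in \mathcal{X} : \|x_{\mathcal{C}} - z_{\mathcal{C}}\|_0 = q,\ \|\mathbf{1}-x_{\mathcal{C}}\|_0 = r_a,\ \|x_{\mathcal{C}}\|_0 = r_d \}$. Then for every $q$ and every $z \in \mathcal{R}_q^{r_a,r_d}$, $$\eta_q^{r_a,r_d} := \frac{\Pr(\phi(x) = z)}{\Pr(\phi(\tilde{x}) = z)} = \left[\frac{p_+}{1-p_-}\right]^{q-r_d}\left[\frac{p_-}{1-p_+}\right]^{q-r_a},$$ which in particular is constant on $\mathcal{R}_q^{r_a,r_d}$. Moreover, for fixed $r_a, r_d$, $\eta_q^{r_a,r_d}$ is a monotonically decreasing function of $q$ if $p_- + p_+ < 1$, constant in $q$ if $p_- + p_+ = 1$, and monotonically increasing in $q$ if $p_- + p_+ > 1$.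
   Context: For $x \in \{0,1\}^d$, $\mathcal{S}_{r_a,r_d}(x)$ is the set of $\tilde{x} \in \{0,1\}^d$ with $\sum_i \mathbb{I}(\tilde{x}_i = x_i - 1) = r_d$ and $\sum_i \mathbb{I}(\tilde{x}_i = x_i + 1) = r_a$ (obtained from $x$ by deleting exactly $r_d$ ones and adding exactly $r_a$ ones). $x_{\mathcal{C}}$ is the restriction of $x$ to the coordinates in $\mathcal{C}$, $\|\cdot\|_0$ counts nonzero entries, $\mathbf{1}$ is the all-ones vector. *)

(* Defs.v *)
From mathcomp Require Import all_boot all_order all_algebra.
Set Implicit Arguments. Unset Strict Implicit. Unset Printing Implicit Defensive.
Import Order.TTheory GRing.Theory Num.Theory.
Local Open Scope ring_scope.

(* Points of X = {0,1}^d are boolean vectors  'I_d -> bool  (true = 1). *)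

Definition flipprob {R : ringType} (pm pp : R) (b : bool) : R :=
  if b then pm else pp.

Definition Pr_phi {R : ringType} (d : nat) (pm pp : R) (x z : 'I_d -> bool) : R :=
  \prod_(i < d) (if z i == x i then 1 - flipprob pm pp (x i)
                 else flipprob pm pp (x i)).

Definition in_S (d ra rd : nat) (x xt : 'I_d -> bool) : Prop :=
  #|[set i | x i && ~~ xt i]| = rd /\ #|[set i | ~~ x i && xt i]| = ra.

Definition Cset (d : nat) (x xt : 'I_d -> bool) : {set 'I_d} :=
  [set i | x i != xt i].

Definition in_R (d ra rd q : nat) (x xt z : 'I_d -> bool) : Prop :=
  [/\ #|[set i in Cset x xt | x i != z i]| = q,
      #|[set i in Cset x xt | ~~ x i]| = ra
    & #|[set i in Cset x xt | x i]| = rd].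

(* Main.v *)
Require Import Defs.
From mathcomp Require Import all_boot all_order all_algebra.
From mathcomp Require Import ring lra zify.
Import Order.TTheory GRing.Theory Num.Theory.
Set Implicit Arguments.
Local Open Scope ring_scope.

Definition cI (b : bool) : int := (b : nat)%:Z.

Lemma cardE d (P : pred 'I_d) : (#|[set i | P i]|)%:Z = \sum_i cI (P i).
Proof.
rewrite cardsE -sum1_card -natz natr_sum big_mkcond /=.
by apply: eq_bigr => i _; rewrite /cI unfold_in; case: (P i).
Qed.

Definition eA d (x xt z : 'I_d -> bool) (i : 'I_d) : int :=
  if x i != xt i then (if x i then (if z i then -1 else 0) else (if z i then 1 else 0)) else 0.
Definition eB d (x xt z : 'I_d -> bool) (i : 'I_d) : int :=
  if x i != xt i then (if x i then (if z i then 0 else 1) else (if z i then 0 else -1)) else 0.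

Lemma ratioE (R : realFieldType) d (pm pp : R)
  (hpm : 0 < pm < 1) (hpp : 0 < pp < 1) (x xt z : 'I_d -> bool) :
  Pr_phi pm pp x z / Pr_phi pm pp xt z =
  (pp / (1 - pm)) ^ (\sum_(i < d) eA x xt z i) * (pm / (1 - pp)) ^ (\sum_(i < d) eB x xt z i).
Proof.
case/andP: hpm => pm0 pm1; case/andP: hpp => pp0 pp1.
have hA : pp / (1 - pm) != 0 by rewrite mulf_neq0 // ?invr_eq0 ?gt_eqF ?subr_gt0 ?lt_eqF.
have hB : pm / (1 - pp) != 0 by rewrite mulf_neq0 // ?invr_eq0 ?gt_eqF ?subr_gt0 ?lt_eqF.
rewrite (big_morph _ (fun m n => expfzDr m n hA) (expr0z _)).
rewrite (big_morph _ (fun m n => expfzDr m n hB) (expr0z _)).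
rewrite /Pr_phi -prodf_div -big_split /=.
apply: eq_bigr => i _.
have n1 : 1 - pm != 0 by rewrite gt_eqF // subr_gt0.
have n2 : 1 - pp != 0 by rewrite gt_eqF // subr_gt0.
have n3 : pm != 0 by rewrite gt_eqF.
have n4 : pp != 0 by rewrite gt_eqF.
rewrite /eA /eB /flipprob.
case: (x i); case: (xt i); case: (z i) => /=;
  rewrite ?expr0z ?expr1z ?exprN1 ?mulr1 ?mul1r; field;
  by rewrite ?n1 ?n2 ?n3 ?n4.
Qed.

Lemma sumA d ra rd q (x xt z : 'I_d -> bool) : in_R ra rd q x xt z ->
  \sum_(i < d) eA x xt z i = q%:Z - rd%:Z.
Proof.
case=> hq _ hrd; rewrite -hq -hrd !cardE -sumrB.
apply: eq_bigr => i _; rewrite /eA /cI /Cset !inE.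
by case: (x i); case: (xt i); case: (z i).
Qed.

Lemma sumB d ra rd q (x xt z : 'I_d -> bool) : in_R ra rd q x xt z ->
  \sum_(i < d) eB x xt z i = q%:Z - ra%:Z.
Proof.
case=> hq hra _; rewrite -hq -hra !cardE -sumrB.
apply: eq_bigr => i _; rewrite /eB /cI /Cset !inE.
by case: (x i); case: (xt i); case: (z i).
Qed.

Lemma etaS (R : fieldType) (A B : R) (hA : A != 0) (hB : B != 0) (q k rd ra : nat) :
  A ^ ((q + k)%N%:Z - rd%:Z) * B ^ ((q + k)%N%:Z - ra%:Z) =
  A ^ (q%:Z - rd%:Z) * B ^ (q%:Z - ra%:Z) * (A * B) ^+ k.
Proof.
have e1 : (q + k)%N%:Z - rd%:Z = (q%:Z - rd%:Z) + k%:Z by rewrite PoszD; ring.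
have e2 : (q + k)%N%:Z - ra%:Z = (q%:Z - ra%:Z) + k%:Z by rewrite PoszD; ring.
rewrite e1 e2 !expfzDr // -!exprnP exprMn; ring.
Qed.

Theorem proposition3 (R : realFieldType) (d : nat) (pm pp : R)
  (hd : (0 < d)%N)
  (hpm : 0 < pm < 1) (hpp : 0 < pp < 1)
  (ra rd : nat) (x xt : 'I_d -> bool) (hS : in_S ra rd x xt) :
  (forall (q : nat) (z : 'I_d -> bool), in_R ra rd q x xt z ->
     Pr_phi pm pp x z / Pr_phi pm pp xt z =
       (pp / (1 - pm)) ^ (q%:Z - rd%:Z) * (pm / (1 - pp)) ^ (q%:Z - ra%:Z))
  /\ (pm + pp < 1 ->
      forall (q1 q2 : nat) (z1 z2 : 'I_d -> bool),
        in_R ra rd q1 x xt z1 -> in_R ra rd q2 x xt z2 -> (q1 < q2)%N ->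
        Pr_phi pm pp x z2 / Pr_phi pm pp xt z2 < Pr_phi pm pp x z1 / Pr_phi pm pp xt z1)
  /\ (pm + pp = 1 ->
      forall (q1 q2 : nat) (z1 z2 : 'I_d -> bool),
        in_R ra rd q1 x xt z1 -> in_R ra rd q2 x xt z2 ->
        Pr_phi pm pp x z2 / Pr_phi pm pp xt z2 = Pr_phi pm pp x z1 / Pr_phi pm pp xt z1)
  /\ (1 < pm + pp ->
      forall (q1 q2 : nat) (z1 z2 : 'I_d -> bool),
        in_R ra rd q1 x xt z1 -> in_R ra rd q2 x xt z2 -> (q1 < q2)%N ->
        Pr_phi pm pp x z1 / Pr_phi pm pp xt z1 < Pr_phi pm pp x z2 / Pr_phi pm pp xt z2).
Proof.
have hpm' := hpm; have hpp' := hpp.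
case/andP: hpm => pm0 pm1; case/andP: hpp => pp0 pp1.
set A := pp / (1 - pm); set B := pm / (1 - pp).
have hA0 : 0 < A by rewrite divr_gt0 // subr_gt0.
have hB0 : 0 < B by rewrite divr_gt0 // subr_gt0.
have hA : A != 0 by rewrite gt_eqF.
have hB : B != 0 by rewrite gt_eqF.
have eta : forall q z, in_R ra rd q x xt z ->
    Pr_phi pm pp x z / Pr_phi pm pp xt z = A ^ (q%:Z - rd%:Z) * B ^ (q%:Z - ra%:Z).
  by move=> q z hR; rewrite ratioE // (sumA hR) (sumB hR).
have n1 : 1 - pm != 0 by rewrite gt_eqF // subr_gt0.
have n2 : 1 - pp != 0 by rewrite gt_eqF // subr_gt0.
have d0 : 0 < (1 - pm) * (1 - pp) by rewrite mulr_gt0 // subr_gt0.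
have AB : A * B = pp * pm / ((1 - pm) * (1 - pp)) by rewrite /A /B; field; rewrite n1 n2.
have e0 : 0 < A ^ (0%N%:Z - rd%:Z) * B ^ (0%N%:Z - ra%:Z) by rewrite mulr_gt0 // exprz_gt0.
have ekey : forall q1 q2, (q1 < q2)%N -> exists2 k, q2 = (q1 + k)%N & k != 0%N.
  by move=> q1 q2 h; exists (q2 - q1)%N; lia.
split; first exact: eta.
split.
  move=> hlt q1 q2 z1 z2 h1 h2 hq; rewrite (eta _ _ h1) (eta _ _ h2).
  have [k -> hk] := ekey _ _ hq.
  have hAB : A * B < 1 by rewrite AB ltr_pdivrMr //; nra.
  have hAB0 : 0 <= A * B by rewrite ltW // mulr_gt0.
  have ep : 0 < A ^ (q1%:Z - rd%:Z) * B ^ (q1%:Z - ra%:Z) by rewrite mulr_gt0 // exprz_gt0.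
  by rewrite etaS // gtr_pMr // exprn_ilt1.
split.
  move=> heq q1 q2 z1 z2 h1 h2; rewrite (eta _ _ h1) (eta _ _ h2).
  have dn : (1 - pm) * (1 - pp) != 0 by rewrite gt_eqF.
  have e : pp * pm = (1 - pm) * (1 - pp).
    have -> : pp = 1 - pm by lra.
    ring.
  have AB1 : A * B = 1 by rewrite AB e divff.
  have := @etaS _ A B hA hB 0 q1 rd ra; have := @etaS _ A B hA hB 0 q2 rd ra.
  by rewrite !add0n AB1 !expr1n !mulr1 => -> ->.
move=> hlt q1 q2 z1 z2 h1 h2 hq; rewrite (eta _ _ h1) (eta _ _ h2).
have [k -> hk] := ekey _ _ hq.
have hAB : 1 < A * B by rewrite AB ltr_pdivlMr //; nra.
have ep : 0 < A ^ (q1%:Z - rd%:Z) * B ^ (q1%:Z - ra%:Z) by rewrite mulr_gt0 // exprz_gt0.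
by rewrite etaS // ltr_pMr // exprn_egt1.
Qed.
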